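(* Up to multiplication by a positive integer, every basic weight of a basic system of type $A$ is one of the following (written in coordinates $(\lambda_1,\dots,\lambda_{n+1})$, $\lambda_k=\langle\lambda,e_k\rangle$): (1) $(A_1,1,1)$: $(\tfrac12,-\tfrac12)$, $(-\tfrac12,\tfrac12)$; (2) $(A_2,1,1)$: $(-\tfrac13,\tfrac23,-\tfrac13)$; (3) $(A_2,1,2)$: $(\tfrac13,\tfrac13,-\tfrac23)$; (4) $(A_2,2,1)$: $(\tfrac23,-\tfrac13,-\tfrac13)$; (5) $(A_2,2,2)$: $(\tfrac13,-\tfrac23,\tfrac13)$; (6) $(A_3,2,2)$: $(\tfrac12,-\tfrac12,\tfrac12,-\tfrac12)$.
   Context: $A_n$ is realized in the hyperplane $\{\sum x_k=0\}$ of $\mathbb R^{n+1}$ with orthonormal basis $e_1,\dots,e_{n+1}$ and standard inner product, with simple roots $\alpha_k=e_k-e_{k+1}$. Let $W$ be the Weyl group, $\alpha^\vee=2\alpha/\langle\alpha,\alpha\rangle$. A weight is integral if $\langle\lambda,\alpha^\vee\rangle\in\mathbb Z$ for all roots $\alpha$; $\overline\lambda$ is the dominant weight in $W\lambda$. For $I=\Delta\setminus\{\alpha_i\}$, $J=\Delta\setminus\{\alpha_j\}$, a basic weight of $(\Phi,i,j)$ is an integral $\lambda$ with $\langle\lambda,\alpha^\vee\rangle\in\mathbb Z_{>0}$ for all $\alpha\in I$ and $\{\alpha\in\Delta:\langle\overline\lambda,\alpha\rangle=0\}=J$; $(\Phi,i,j)$ is a basic system if it has a basic weight. *)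

(* Defs.v *)
From HB Require Import structures.
From mathcomp Require Import all_boot all_order all_algebra.
From Stdlib Require Import Relations.Relation_Definitions Relations.Relation_Operators.
Set Implicit Arguments. Unset Strict Implicit. Unset Printing Implicit Defensive.
Import Order.TTheory GRing.Theory Num.Theory.
Local Open Scope ring_scope.

Definition evec (R : fieldType) (n : nat) (k : 'I_n.+1) : 'rV[R]_(n.+1) :=
  delta_mx 0 k.

Definition ip (R : fieldType) (n : nat) (u v : 'rV[R]_(n.+1)) : R :=
  \sum_(k < n.+1) u 0 k * v 0 k.

Definition is_root (R : fieldType) (n : nat) (a : 'rV[R]_(n.+1)) : Prop :=
  exists (p q : 'I_n.+1), p != q /\ a = evec R p - evec R q.

Definition coroot (R : fieldType) (n : nat) (a : 'rV[R]_(n.+1)) : 'rV[R]_(n.+1) :=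
  (2 / ip a a) *: a.

(* simple root alpha_{k+1} = e_{k+1} - e_{k+2} (paper's 1-based indexing),
   for k : 'I_n *)
Definition simple_root (R : fieldType) (n : nat) (k : 'I_n) : 'rV[R]_(n.+1) :=
  evec R (widen_ord (leqnSn n) k) - evec R (lift ord0 k).

Definition reflect_by (R : fieldType) (n : nat) (a v : 'rV[R]_(n.+1)) :=
  v - ip v (coroot a) *: a.

Definition weyl_step (R : fieldType) (n : nat) : relation 'rV[R]_(n.+1) :=
  fun x y => exists a, is_root a /\ y = reflect_by a x.

Definition in_W_orbit (R : fieldType) (n : nat) (lam mu : 'rV[R]_(n.+1)) : Prop :=
  clos_refl_trans _ (@weyl_step R n) lam mu.

Definition is_integer (R : numDomainType) (x : R) : Prop :=
  exists z : int, x = z%:~R.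

Definition in_hyperplane (R : fieldType) (n : nat) (lam : 'rV[R]_(n.+1)) : Prop :=
  \sum_(k < n.+1) lam 0 k = 0.

Definition integral (R : numFieldType) (n : nat) (lam : 'rV[R]_(n.+1)) : Prop :=
  in_hyperplane lam /\ forall a, is_root a -> is_integer (ip lam (coroot a)).

Definition dominant (R : numFieldType) (n : nat) (mu : 'rV[R]_(n.+1)) : Prop :=
  forall k : 'I_n, 0 <= ip mu (coroot (simple_root R k)).

(* basic weight of (A_n, i, j), with i, j in {1,..,n} (paper's indexing):
   simple root alpha_{k+1} corresponds to k : 'I_n. *)
Definition basic_weight (R : numFieldType) (n i j : nat) (lam : 'rV[R]_(n.+1)) : Prop :=
  [/\ integral lam,
      (forall k : 'I_n, k.+1 != i ->
         exists z : int, (0 < z)%R /\ ip lam (coroot (simple_root R k)) = z%:~R)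
    & exists mu, [/\ in_W_orbit lam mu, dominant mu &
         forall k : 'I_n, ip mu (simple_root R k) = 0 <-> k.+1 != j]].

Definition basic_system (R : numFieldType) (n i j : nat) : Prop :=
  exists lam : 'rV[R]_(n.+1), basic_weight i j lam.

Definition candidates (R : fieldType) (n i j : nat) : seq (seq R) :=
  match n, i, j with
  | 1%N, 1%N, 1%N => [:: [:: 1/2; -(1/2)]; [:: -(1/2); 1/2]]
  | 2%N, 1%N, 1%N => [:: [:: -(1/3); 2/3; -(1/3)]]
  | 2%N, 1%N, 2%N => [:: [:: 1/3; 1/3; -(2/3)]]
  | 2%N, 2%N, 1%N => [:: [:: 2/3; -(1/3); -(1/3)]]
  | 2%N, 2%N, 2%N => [:: [:: 1/3; -(2/3); 1/3]]
  | 3%N, 2%N, 2%N => [:: [:: 1/2; -(1/2); 1/2; -(1/2)]]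
  | _, _, _ => [::]
  end.

Definition listed (R : fieldType) (n i j : nat) (mu : 'rV[R]_(n.+1)) : Prop :=
  exists2 s, s \in candidates R n i j & forall k : 'I_n.+1, mu 0 k = s`_k.

Arguments basic_weight {R} n i j lam.
Arguments basic_system R n i j.
Arguments listed {R} n i j mu.

(* Main.v *)
Require Import Defs.
From HB Require Import structures.
From mathcomp Require Import all_boot all_order all_algebra all_fingroup.
From mathcomp Require Import zify ring lra.
Set Implicit Arguments. Unset Strict Implicit. Unset Printing Implicit Defensive.
Import Order.TTheory GRing.Theory Num.Theory.
Local Open Scope ring_scope.

Section S.
Variable R : realFieldType.
Variable n : nat.
Implicit Types u v w x y : 'rV[R]_(n.+1).

Lemma ip_evec u p : ip u (evec R p) = u 0 p.
Proof.
rewrite /ip (bigD1 p) //= big1 => [|k kp]; rewrite /evec !mxE ?eqxx /=.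
  by rewrite mulr1 addr0.
by rewrite (negbTE kp) mulr0.
Qed.

Lemma ipBr u v w : ip u (v - w) = ip u v - ip u w.
Proof. by rewrite /ip -sumrB; apply: eq_bigr => k _; rewrite !mxE mulrBr. Qed.

Lemma ipC u v : ip u v = ip v u.
Proof. by apply: eq_bigr => k _; rewrite mulrC. Qed.

Lemma ip_root (p q : 'I_n.+1) : p != q ->
  ip (evec R p - evec R q) (evec R p - evec R q) = 2.
Proof.
move=> pq; rewrite ipBr !ip_evec /evec !mxE !eqxx /=. idtac.
have H1 : (p == q) = false by exact: negbTE. have H2 : (q == p) = false by rewrite eq_sym; exact: negbTE. rewrite H1 H2 /=. ring.
Qed.

Lemma coroot_root (p q : 'I_n.+1) : p != q ->
  coroot (evec R p - evec R q) = evec R p - evec R q.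
Proof. by move=> pq; rewrite /coroot ip_root // divff ?scale1r // pnatr_eq0. Qed.

Lemma ip_diff u (p q : 'I_n.+1) : p != q ->
  ip u (coroot (evec R p - evec R q)) = u 0 p - u 0 q.
Proof. by move=> pq; rewrite coroot_root // ipBr !ip_evec. Qed.

Lemma reflect_entry x (p q k : 'I_n.+1) : p != q ->
  reflect_by (evec R p - evec R q) x 0 k = x 0 (tperm p q k).
Proof.
move=> pq; rewrite /reflect_by ip_diff // /evec !mxE /=.
case: tpermP => [->|->|/eqP kp /eqP kq].
- by rewrite eqxx (negbTE pq) subr0 mulr1; ring.
- by rewrite eqxx eq_sym (negbTE pq) sub0r mulrN1 opprK; ring.
- by rewrite (negbTE kp) (negbTE kq) subr0 mulr0 subr0.
Qed.

Lemma orbit_perm x y : in_W_orbit x y ->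
  exists s : 'S_n.+1, forall k, x 0 k = y 0 (s k).
Proof.
elim => {x y} [x y [a [[p [q [pq ->]]] ->]]| x | x y z _ [s1 H1] _ [s2 H2]].
- exists (tperm p q) => k; rewrite reflect_entry // tpermK //.
- by exists 1%g => k; rewrite perm1.
- by exists (s1 * s2)%g => k; rewrite permM H1 H2.
Qed.
Lemma sr_eq (k : 'I_n) :
  simple_root R k = evec R (inord k) - evec R (inord k.+1).
Proof.
have hk := ltn_ord k.
by rewrite /simple_root; congr (evec _ _ - evec _ _); apply: val_inj => /=;
  rewrite inordK //; lia.
Qed.

Lemma sr_neq (k : 'I_n) : (inord k : 'I_n.+1) != inord k.+1.
Proof.
have hk := ltn_ord k.
apply/eqP => /(congr1 val) /=; rewrite !inordK; lia.
Qed.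

Lemma sr_ip u (k : 'I_n) :
  ip u (coroot (simple_root R k)) = u 0 (inord k) - u 0 (inord k.+1).
Proof. by rewrite sr_eq ip_diff // sr_neq. Qed.

Lemma sr_ip' u (k : 'I_n) :
  ip u (simple_root R k) = u 0 (inord k) - u 0 (inord k.+1).
Proof. by rewrite sr_eq -(coroot_root (sr_neq k)) ip_diff // sr_neq. Qed.
End S.

Unset Implicit Arguments.
Theorem theorem5p7 (R : realFieldType) (n i j : nat) (lam : 'rV[R]_(n.+1)) :
  (0 < n)%N -> (1 <= i <= n)%N -> (1 <= j <= n)%N ->
  basic_system R n i j ->
  basic_weight n i j lam ->
  exists m : nat, (0 < m)%N /\
    exists2 mu : 'rV[R]_(n.+1), listed n i j mu & lam = m%:R *: mu.
Proof.
move=> n0 /andP[i1 iN] /andP[j1 jN] _ [[hyp integ] Hstr [mu [orb dom Hz]]].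
have [s Hs] := orbit_perm orb.
pose f k := mu 0 (inord k).
have Df k : (k < n)%N -> 0 <= f k - f k.+1.
  by move=> kn; have := dom (Ordinal kn); rewrite sr_ip.
have Zf k : (k < n)%N -> (f k - f k.+1 = 0 <-> k.+1 != j).
  by move=> kn; have := Hz (Ordinal kn); rewrite sr_ip'.
have fa k : (k < j)%N -> f k = f 0.
  elim: k => // k IH kj; rewrite -IH; last lia.
  have [_ h] := Zf k ltac:(lia).
  by apply/esym/eqP; rewrite -subr_eq0 h //; apply/eqP; lia.
have fb d : (j + d <= n)%N -> f (j + d)%N = f j.
  elim: d => [|d IH] jd; first by rewrite addn0.
  rewrite -IH; last lia.
  have [_ h] := Zf (j + d)%N ltac:(lia).
  by apply/esym/eqP; rewrite addnS -subr_eq0 h //; apply/eqP; lia.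
have ab : f j < f 0.
  rewrite -(fa j.-1); last lia.
  have := Df j.-1 ltac:(lia); have [h _] := Zf j.-1 ltac:(lia).
  rewrite prednK // in h * => h0.
  rewrite -subr_gt0 lt_def h0 andbT; apply/negP => /eqP /h.
  by rewrite eqxx.
pose a := f 0; pose b := f j.
have lamE (k : 'I_n.+1) : lam 0 k = if (s k < j)%N then a else b.
  rewrite Hs; have -> : mu 0 (s k) = f (s k) by rewrite /f inord_val.
  have := ltn_ord (s k).
  case: (ltnP (s k) j) => h1 h2; first exact: fa.
  rewrite -(subnKC h1) fb //; lia.
have sumE : a *+ j + b *+ (n.+1 - j) = 0.
  have e0 : \sum_(k < n.+1) lam 0 k = \sum_(k < n.+1) mu 0 k.
    under eq_bigr do rewrite Hs.
    by symmetry; apply: reindex_inj; exact: perm_inj.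
  have e1 : \sum_(k < n.+1) mu 0 k = \sum_(0 <= k < n.+1) f k.
    by rewrite big_mkord; apply: eq_bigr => k _; rewrite /f inord_val.
  rewrite -hyp /in_hyperplane e0 e1 (big_cat_nat _ (n:=j)) //=; last lia.
  rewrite -{1}(subn0 j) -(sumr_const_nat j 0 a) -(sumr_const_nat n.+1 j b).
  congr (_ + _); apply: eq_big_nat => k /andP[k1 k2].
    by rewrite fa.
  by rewrite -(subnKC k1) fb //; lia.
have [m [m0 abm]] : exists m : nat, (0 < m)%N /\ a - b = m%:R.
  pose p := (s^-1)%g (inord 0); pose q := (s^-1)%g (inord j).
  have lp : lam 0 p = a by rewrite Hs permKV.
  have lq : lam 0 q = b by rewrite Hs permKV.
  have pq : p != q.
    apply/eqP => e; move: lq; rewrite -e lp => abq.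
    by move: ab; rewrite -/a -/b abq ltxx.
  have [z hz] := integ (evec R p - evec R q) (ex_intro _ p (ex_intro _ q (conj pq erefl))).
  rewrite ip_diff // lp lq in hz.
  have := ab; rewrite -/a -/b -subr_gt0 hz ltr0z.
  case: z hz => [m'|m'] hz //= hm.
  by exists m'; split => //; lia.
pose T k := nat_of_ord (s (inord k) : 'I_n.+1).
have Tle k : (T k <= n)%N by rewrite /T -ltnS ltn_ord.
have Tinj p q : (p <= n)%N -> (q <= n)%N -> T p = T q -> p = q.
  move=> hp hq /val_inj /perm_inj /(congr1 (@nat_of_ord _)); rewrite !inordK //.
have gE k (H : (k < n.+1)%N) : lam 0 (Ordinal H) = if (T k < j)%N then a else b.
  have -> : Ordinal H = inord k by exact: (esym (inord_val (Ordinal H))).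
  exact: lamE.
have Tstep k : (k < n)%N -> k.+1 <> i -> (T k < j <= T k.+1)%N.
  move=> kn ki; have [z [z0 hz]] := Hstr (Ordinal kn) (introN eqP ki).
  move: z0; rewrite -(ltr0z R) -hz sr_ip /= !lamE /T.
  case: ifP; case: ifP => h1 h2; rewrite ?subrr ?ltxx //.
    by rewrite leqNgt h1.
  by rewrite subr_gt0 ltNge (ltW ab).
have Mnz : (m%:R : R) != 0 by rewrite pnatr_eq0 -lt0n.
have N1nz : (n.+1%:R : R) != 0 by rewrite pnatr_eq0.
have ha : a = b + m%:R by rewrite -abm; ring.
have hb : b = - (m%:R * j%:R) / n.+1%:R.
  have hsum : a * j%:R + b * (n.+1%:R - j%:R) = 0.
    by rewrite -natrB ?(leqW jN) // !mulr_natr.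
  rewrite ha in hsum.
  have e : b * n.+1%:R + m%:R * j%:R = 0 by rewrite -hsum; ring.
  have e' : b * n.+1%:R = - (m%:R * j%:R) by apply/eqP; rewrite -addr_eq0 e.
  by rewrite -e' mulfK.
clearbody T a b.
exists m; split => //; exists (m%:R^-1 *: lam); last first.
  by rewrite scalerA mulfV ?scale1r.
have : n = 1%N \/ n = 2%N \/ n = 3%N.
  have := Tstep 0%N; have := Tstep 1%N; have := Tstep 2%N; have := Tstep 3%N.
  lia.
case=> [?|[?|?]]; subst n.
- have ? : i = 1%N by lia.
  have ? : j = 1%N by lia.
  subst i j.
  have t01 := Tinj 0%N 1%N isT isT.
  have l0 := Tle 0%N; have l1 := Tle 1%N.
  rewrite /listed /=.
  case: (ltnP (T 0%N) 1) => h0.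
    exists [:: 1/2; -(1/2)]; first by rewrite inE eqxx.
    case => [[|[|[|[|k]]]] Hk] //=; rewrite mxE gE; case: ltnP => hc; try (exfalso; lia); rewrite ?ha; rewrite ?hb; field; exact: Mnz.
  exists [:: -(1/2); 1/2]; first by rewrite !inE eqxx orbT.
  case => [[|[|[|[|k]]]] Hk] //=; rewrite mxE gE; case: ltnP => hc; try (exfalso; lia); rewrite ?ha; rewrite ?hb; field; exact: Mnz.
- have t01 := Tinj 0%N 1%N isT isT.
  have t02 := Tinj 0%N 2%N isT isT.
  have t12 := Tinj 1%N 2%N isT isT.
  have l0 := Tle 0%N; have l1 := Tle 1%N; have l2 := Tle 2%N.
  have s0 := Tstep 0%N isT; have s1 := Tstep 1%N isT.
  have hi : i = 1%N \/ i = 2%N by lia.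
  have hj : j = 1%N \/ j = 2%N by lia.
  case: hi => ?; case: hj => ?; subst i j; rewrite /listed /=;
    (eexists; [exact: mem_head|]); case => [[|[|[|[|k]]]] Hk] //=; rewrite mxE gE; case: ltnP => hc; try (exfalso; lia); rewrite ?ha; rewrite ?hb; field; exact: Mnz.
- have ? : i = 2%N.
    have := Tstep 0%N isT; have := Tstep 1%N isT; have := Tstep 2%N isT; lia.
  subst i.
  have s0 := Tstep 0%N isT; have s2 := Tstep 2%N isT ltac:(by []).
  have s0' := s0 ltac:(by []).
  have t01 := Tinj 0%N 1%N isT isT.
  have t02 := Tinj 0%N 2%N isT isT.
  have t03 := Tinj 0%N 3%N isT isT.
  have t12 := Tinj 1%N 2%N isT isT.
  have t13 := Tinj 1%N 3%N isT isT.
  have t23 := Tinj 2%N 3%N isT isT.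
  have l0 := Tle 0%N; have l1 := Tle 1%N; have l2 := Tle 2%N; have l3 := Tle 3%N.
  have ? : j = 2%N by lia.
  subst j; rewrite /listed /=.
  eexists; first exact: mem_head.
  case => [[|[|[|[|k]]]] Hk] //=; rewrite mxE gE; case: ltnP => hc; try (exfalso; lia); rewrite ?ha; rewrite ?hb; field; exact: Mnz.
Qed.
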